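(* Let $n\ge 1$ and let $M\le N$ be integers. For each $s\in\{0,1,\dots,n\}$, let $\mathcal P_s$ be the set of pure diagrams $\pi(d_0,\dots,d_t)$ lying in $B_{M,N}$ with codimension $t\ge s$, partially ordered as described in the context. Then every maximal chain in $\mathcal P_s$ is a basis of the $\mathbb Q$-vector space $B^s_{M,N}$.
   Context: $B_{M,N}$ is the $\mathbb Q$-vector space of arrays $\beta=(\beta_{i,j})$ indexed by $0\le i\le n$, $j\in\mathbb Z$, with $\beta_{i,j}=0$ unless $M+i\le j\le N+i$ (so $\dim B_{M,N}=(n+1)(N-M+1)$). For $0\le s\le n$, $B^s_{M,N}$ is the subspace of those $\beta$ satisfying the Herzog–Kühl equations $\sum_{i=0}^n\sum_{j}(-1)^i\beta_{i,j}\,j^m=0$ for $m=0,1,\dots,s-1$. For integers $d_0<d_1<\dots<d_t$ with $0\le t\le n$, the pure diagram $\pi(d_0,\dots,d_t)$ is the array whose entry in position $(i,d_i)$ is $(-1)^i\prod_{0\le j\le t,\,j\ne i}\frac{1}{d_j-d_i}$ for $i=0,\dots,t$, and whose other entries are $0$; its codimension is $t$. It lies in $B_{M,N}$ iff $M+i\le d_i\le N+i$ for all $i$. Partial order: $\pi(d_0,\dots,d_t)\le\pi(d'_0,\dots,d'_u)$ iff $t\ge u$ and $d_i\le d'_i$ for $i=0,\dots,u$. A chain is a totally ordered subset; a maximal chain of a set is a chain in that set not properly contained in another chain in that set. *)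

(* Defs.v *)
From mathcomp Require Import all_boot all_order all_algebra.
Set Implicit Arguments. Unset Strict Implicit. Unset Printing Implicit Defensive.
Import Order.TTheory GRing.Theory Num.Theory.
Local Open Scope ring_scope.

Definition array := nat -> int -> rat.

Definition inB (n : nat) (M N : int) (beta : array) : Prop :=
  forall (i : nat) (j : int), beta i j != 0 ->
    (i <= n)%N /\ M + i%:Z <= j /\ j <= N + i%:Z.

(* Herzog--Kuehl equations for m = 0, ..., s-1.  For fixed i the sum over j
   runs over the band M+i <= j <= N+i (j = M + i + k, 0 <= k <= N - M),
   which contains every possibly nonzero entry of an element of B_{M,N}. *)
Definition HK (n : nat) (M N : int) (s : nat) (beta : array) : Prop :=
  forall m : nat, (m < s)%N ->
    \sum_(i < n.+1) \sum_(k < `|N - M|%N.+1)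
       (-1) ^+ i * beta i (M + i%:Z + k%:Z) * ((M + i%:Z + k%:Z)%:~R) ^+ m = 0.

Definition inBs (n : nat) (M N : int) (s : nat) (beta : array) : Prop :=
  inB n M N beta /\ HK n M N s beta.

Definition pure (d : seq int) : array :=
  fun i j =>
    if (i < size d)%N && (j == nth 0 d i) then
      (-1) ^+ i * \prod_(k < size d | k != i :> nat)
                    ((nth 0 d k - nth 0 d i)%:~R)^-1
    else 0.

(* d is the degree sequence of a pure diagram in B_{M,N} of codimension
   t = size d - 1 with s <= t <= n, i.e. an element of P_s. *)
Definition inP (n : nat) (M N : int) (s : nat) (d : seq int) : Prop :=
  (s < size d)%N /\ (size d <= n.+1)%N /\ sorted <%R d /\
  forall i : nat, (i < size d)%N ->
    M + i%:Z <= nth 0 d i /\ nth 0 d i <= N + i%:Z.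

Definition pd_le (d d' : seq int) : Prop :=
  (size d' <= size d)%N /\
  forall i : nat, (i < size d')%N -> nth 0 d i <= nth 0 d' i.

(* A chain in P_s (a set of pure diagrams, given by their degree sequences;
   d |-> pure d is injective on P_s). *)
Definition chain (n : nat) (M N : int) (s : nat) (C : seq int -> Prop) : Prop :=
  (forall d, C d -> inP n M N s d) /\
  (forall d d', C d -> C d' -> pd_le d d' \/ pd_le d' d).

Definition maximal_chain (n : nat) (M N : int) (s : nat) (C : seq int -> Prop) : Prop :=
  chain n M N s C /\
  forall C' : seq int -> Prop, chain n M N s C' ->
    (forall d, C d -> C' d) -> forall d, C' d -> C d.

Definition lincomb (ds : seq (seq int)) (c : seq int -> rat) : array :=
  fun i j => \sum_(d <- ds) c d * pure d i j.

Definition is_basis_Bs (n : nat) (M N : int) (s : nat) (C : seq int -> Prop) : Prop :=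
  (forall (ds : seq (seq int)) (c : seq int -> rat),
     uniq ds -> (forall d, d \in ds -> C d) ->
     (forall i j, lincomb ds c i j = 0) ->
     forall d, d \in ds -> c d = 0) /\
  (forall beta : array,
     inBs n M N s beta <->
     exists (ds : seq (seq int)) (c : seq int -> rat),
       (forall d, d \in ds -> C d) /\ forall i j, beta i j = lincomb ds c i j).

(* Main.v *)
Require Import Defs.
From mathcomp Require Import all_boot all_order all_algebra.
From mathcomp Require Import zify ring lra.
From Stdlib Require Import Classical ClassicalEpsilon FunctionalExtensionality.
Import Order.TTheory GRing.Theory Num.Theory.
Local Open Scope ring_scope.

Set Implicit Arguments. Unset Strict Implicit. Unset Printing Implicit Defensive.


Lemma pd_le_refl d : pd_le d d.
Proof. by split=> // i _. Qed.

Lemma pd_le_trans d1 d2 d3 : pd_le d1 d2 -> pd_le d2 d3 -> pd_le d1 d3.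
Proof.
move=> [s12 h12] [s23 h23]; split; first exact: leq_trans s23 s12.
move=> i hi; apply: le_trans (h12 i _) (h23 i hi); exact: leq_trans hi s23.
Qed.

Lemma pd_le_anti d1 d2 : pd_le d1 d2 -> pd_le d2 d1 -> d1 = d2.
Proof.
move=> [s12 h12] [s21 h21].
have es : size d1 = size d2 by apply/eqP; rewrite eqn_leq s12 s21.
apply: (eq_from_nth (x0 := 0)) => // i hi.
by apply/eqP; rewrite eq_le h21 ?h12 // -es.
Qed.

Lemma inP_lt n M N s d i j : inP n M N s d -> (i < j)%N -> (j < size d)%N ->
  nth 0 d i < nth 0 d j.
Proof.
move=> [_ [_ [hs _]]] hij hj.
apply: (sorted_ltn_nth lt_trans 0 hs) => //; rewrite inE //.
exact: ltn_trans hij hj.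
Qed.

Definition rho (n : nat) (M N : int) (d : seq int) : int :=
  \sum_(0 <= i < size d) (nth 0 d i - M - i%:Z) + (N - M + 1) * ((n.+1 - size d)%N)%:Z.


Lemma rho_le n M N s d d' : inP n M N s d -> inP n M N s d' -> pd_le d d' ->
  rho n M N d + ((size d - size d')%N)%:Z
   + \sum_(0 <= i < size d') (nth 0 d' i - nth 0 d i) <= rho n M N d'.
Proof.
move=> hd hd' [hs hle]; rewrite /rho.
rewrite (@big_cat_nat _ _ _ (size d') 0 (size d)) /=; [|by []|by []].
have e1 : \sum_(0 <= i < size d') (nth 0 d' i - M - i%:Z) =
   \sum_(0 <= i < size d') (nth 0 d i - M - i%:Z)
   + \sum_(0 <= i < size d') (nth 0 d' i - nth 0 d i).
  rewrite -big_split /=; apply: eq_bigr => i _; ring.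
have e2 : \sum_(size d' <= i < size d) (nth 0 d i - M - i%:Z)
     <= ((size d - size d')%N)%:Z * (N - M).
  have -> : ((size d - size d')%N)%:Z * (N - M) =
     \sum_(size d' <= i < size d) (N - M).
    by rewrite sumr_const_nat -mulr_natr -natz mulrC.
  rewrite big_nat_cond [X in _ <= X]big_nat_cond; apply: ler_sum => i /andP [/andP [_ hi] _].
  case: hd => [_ [_ [_ hb]]]; have [h1 h2] := hb i hi; lia.
rewrite e1.
case: hd' => [_ [hd'1 _]]; case: hd => [_ [hd1 _]].
move: e2; set A := \sum_(_ <= _ < _ ) _; set B := \sum_(_ <= _ < _ ) _; set C := \sum_(_ <= _ < _ ) _.
move: hs hd1 hd'1; set a := size d; set b := size d'.
move=> hs hd1 hd'1 e2.
have -> : ((n.+1 - a)%N)%:Z = n.+1%:Z - a%:Z by lia.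
have -> : ((n.+1 - b)%N)%:Z = n.+1%:Z - b%:Z by lia.
have -> : ((a - b)%N)%:Z = a%:Z - b%:Z by lia.
move: e2; rewrite (_ : ((a - b)%N)%:Z = a%:Z - b%:Z); last by lia.
nia.
Qed.

Lemma sum_diff_ge0 d d' : pd_le d d' ->
  0 <= \sum_(0 <= i < size d') (nth 0 d' i - nth 0 d i).
Proof.
move=> [_ h]; rewrite big_nat_cond; apply: sumr_ge0 => i /andP [/andP [_ hi] _].
by rewrite subr_ge0 h.
Qed.

Lemma rho_lt n M N s d d' : inP n M N s d -> inP n M N s d' -> pd_le d d' ->
  d <> d' -> rho n M N d < rho n M N d'.
Proof.
move=> hd hd' hle hne; have h := rho_le hd hd' hle.
have h0 := sum_diff_ge0 hle.
case: (ltnP (size d') (size d)) => hs.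
  apply: lt_le_trans h; have : (1 <= (size d - size d')%N)%N by rewrite subn_gt0.
  lia.
have es : size d = size d' by case: hle => h1 _; apply/eqP; rewrite eqn_leq hs h1.
case: (boolP (\sum_(0 <= i < size d') (nth 0 d' i - nth 0 d i) == 0)) => [/eqP h1|h1].
  exfalso; apply: hne; apply: (eq_from_nth (x0 := 0)) => // i hi.
  have hi' : (i < size d')%N by rewrite -es.
  move: h1; rewrite big_mkord => h1.
  have hge : forall j : 'I_(size d'), true -> 0 <= d'`_j - d`_j.
    by move=> j _; case: hle => _ hl; rewrite subr_ge0 hl.
  have := psumr_eq0P hge h1; move=> /(_ (Ordinal hi') isT) /eqP.
  by rewrite /= subr_eq0 => /eqP ->.
apply: lt_le_trans h; rewrite es subnn; lia.
Qed.

Lemma sum_set_nth (M : int) d i x : (i < size d)%N ->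
  \sum_(0 <= k < size d) (nth 0 (set_nth 0 d i x) k - M - k%:Z) =
  \sum_(0 <= k < size d) (nth 0 d k - M - k%:Z) + (x - nth 0 d i).
Proof.
move=> hi; rewrite !big_mkord (bigD1 (Ordinal hi)) //= [X in _ = X + _](bigD1 (Ordinal hi)) //=.
rewrite nth_set_nth /= eqxx.
have -> : \sum_(k < size d | k != Ordinal hi) (nth 0 (set_nth 0 d i x) k - M - k%:Z)
  = \sum_(k < size d | k != Ordinal hi) (nth 0 d k - M - k%:Z).
  apply: eq_bigr => k hk; rewrite nth_set_nth /=.
  by case: eqP => // hki; move: hk; rewrite -val_eqE /= hki eqxx.
ring.
Qed.

Lemma inP_set n M N s d i : inP n M N s d -> (i < size d)%N ->
  nth 0 d i + 1 <= N + i%:Z ->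
  ((i.+1 < size d)%N -> nth 0 d i + 1 < nth 0 d i.+1) ->
  let e := set_nth 0 d i (nth 0 d i + 1) in
  inP n M N s e /\ pd_le d e /\ rho n M N e = rho n M N d + 1.
Proof.
move=> hd hi hb hn e.
have se : size e = size d by rewrite /e size_set_nth; apply/maxn_idPr.
have ne k : nth 0 e k = if k == i then nth 0 d i + 1 else nth 0 d k.
  by rewrite /e nth_set_nth.
case: (hd) => [h1 [h2 [h3 h4]]].
split; last split.
- split; first by rewrite se. split; first by rewrite se.
  split.
    apply/(sortedP 0) => k; rewrite se => hk; rewrite !ne.
    case: (eqVneq k i) => [ek|hki]; first by subst k; rewrite (gtn_eqF (ltnSn i)); exact: (hn hk).
    case: (eqVneq k.+1 i) => [hk1|hk1].
      rewrite -hk1; apply: lt_le_trans (inP_lt hd (ltnSn k) hk) _; lra.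
    exact: inP_lt hd (ltnSn k) hk.
  move=> k; rewrite se => hk; rewrite ne; case: eqP => [->|_]; last exact: h4.
  have [a b] := h4 i hi; lia.
- split; first by rewrite se.
  by move=> k hk; rewrite ne; case: eqP => [->|_] //; lra.
rewrite /rho se sum_set_nth //; ring.
Qed.

Lemma inP_take n M N s d : inP n M N s d -> (s.+1 < size d)%N ->
  nth 0 d (size d).-1 = N + ((size d).-1)%:Z ->
  inP n M N s (take (size d).-1 d) /\ pd_le d (take (size d).-1 d) /\
  rho n M N (take (size d).-1 d) = rho n M N d + 1.
Proof.
move=> hd hs hN.
case: (hd) => [h1 [h2 [h3 h4]]].
have sd : size d = (size d).-1.+1 by rewrite prednK // (leq_ltn_trans _ hs).
move: hN; set t := (size d).-1 => hN.
set e := take t d.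
have se : size e = t by rewrite /e size_take {1}sd ltnSn.
have ne k : (k < t)%N -> nth 0 e k = nth 0 d k by move=> hk; rewrite /e nth_take.
split; last split.
- split; first by rewrite se -ltnS -sd.
  split; first by rewrite se; apply: leq_trans h2; rewrite sd.
  split; first exact: take_sorted.
  move=> k; rewrite se => hk; rewrite ne //; apply: h4; rewrite sd; exact: ltnW.
- split; first by rewrite se sd.
  by move=> k; rewrite se => hk; rewrite ne.
rewrite /rho se sd big_nat_recr //= hN.
have -> : \sum_(0 <= i < t) (nth 0 e i - M - i%:Z) = \sum_(0 <= i < t) (nth 0 d i - M - i%:Z).
  by rewrite big_nat_cond [RHS]big_nat_cond; apply: eq_bigr => i /andP [/andP [_ hi] _]; rewrite ne.
have : (t.+1 <= n.+1)%N by rewrite -sd.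
move=> ht.
have -> : ((n.+1 - t)%N)%:Z = ((n.+1 - t.+1)%N)%:Z + 1 by lia.
ring.
Qed.

Lemma between n M N s d d' : inP n M N s d -> inP n M N s d' -> pd_le d d' ->
  rho n M N d + 2 <= rho n M N d' ->
  exists e, inP n M N s e /\ pd_le d e /\ pd_le e d' /\ rho n M N e = rho n M N d + 1.
Proof.
move=> hd hd' hle hr.
case: (hd) => [h1 [h2 [h3 h4]]]; case: (hd') => [h1' [h2' [h3' h4']]].
case: (hle) => hs hl.
case: (ltnP (size d') (size d)) => hs2.
  have sd : size d = (size d).-1.+1 by rewrite prednK // (leq_ltn_trans _ hs2).
  move: sd; set t := (size d).-1 => sd.
  have ht : (t < size d)%N by rewrite sd.
  have hs't : (size d' <= t)%N by rewrite -ltnS -sd.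
  have [lo up] := h4 t ht.
  case: (boolP (nth 0 d t + 1 <= N + t%:Z)) => hb.
    have hv : (t.+1 < size d)%N -> nth 0 d t + 1 < nth 0 d t.+1 by rewrite sd ltnn.
    have [he [hde hre]] := inP_set hd ht hb hv.
    exists (set_nth 0 d t (nth 0 d t + 1)); split=> //; split=> //; split=> //.
    split; first by rewrite size_set_nth (maxn_idPr ht); exact: ltnW.
    move=> k hk; rewrite nth_set_nth /=.
    have -> : (k == t) = false by apply/negbTE; rewrite neq_ltn (leq_trans hk hs't).
    exact: hl.
  have hN : nth 0 d t = N + t%:Z by move: hb; rewrite -ltNge; lia.
  have hst : (s.+1 < size d)%N by apply: leq_trans hs2.
  have [he [hde hre]] := inP_take hd hst hN.
  exists (take t d); split=> //; split=> //; split=> //.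
  split; first by rewrite size_take ht.
  by move=> k hk; rewrite nth_take ?(leq_trans hk hs't) //; exact: hl.
have es : size d' = size d by apply/eqP; rewrite eqn_leq hs hs2.
pose P i := (i < size d)%N && (nth 0 d i < nth 0 d' i).
have exP : exists i, P i.
  apply: NNPP => hno; have ed : d = d'.
    apply: (eq_from_nth (x0 := 0)) => // i hi.
    have hi' : (i < size d')%N by rewrite es.
    have := hl i hi'; rewrite le_eqVlt => /orP [/eqP //|hlt].
    by exfalso; apply: hno; exists i; rewrite /P hi hlt.
  by move: hr; rewrite ed; lra.
have ubP : forall i, P i -> (i <= size d)%N by move=> i /andP [hi _]; exact: ltnW.
case: (ex_maxnP exP ubP) => i /andP [hi hlt] hmax.
have hi' : (i < size d')%N by rewrite es.
have [lo' up'] := h4' i hi'.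
have hb : nth 0 d i + 1 <= N + i%:Z by lia.
have hv : (i.+1 < size d)%N -> nth 0 d i + 1 < nth 0 d i.+1.
  move=> hi1.
  have hn : ~~ P i.+1 by apply/negP => /hmax; rewrite ltnn.
  have e1 : nth 0 d i.+1 = nth 0 d' i.+1.
    have hi1' : (i.+1 < size d')%N by rewrite es.
    have := hl i.+1 hi1'; rewrite le_eqVlt => /orP [/eqP //|hlt2].
    by move: hn; rewrite /P hi1 hlt2.
  have hi1' : (i.+1 < size d')%N by rewrite es.
  rewrite e1; apply: le_lt_trans (inP_lt hd' (ltnSn i) hi1').
  lia.
have [he [hde hre]] := inP_set hd hi hb hv.
exists (set_nth 0 d i (nth 0 d i + 1)); split=> //; split=> //; split=> //.
split; first by rewrite size_set_nth (maxn_idPr hi) es.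
move=> k hk; rewrite nth_set_nth /=; case: eqP => [->|_]; last exact: hl.
move: hlt; rewrite /=; lia.
Qed.


Definition botd (n : nat) (M : int) : seq int := mkseq (fun i => M + i%:Z) n.+1.
Definition topd (s : nat) (N : int) : seq int := mkseq (fun i => N + i%:Z) s.+1.

Lemma botd_in n M N s : M <= N -> (s <= n)%N -> inP n M N s (botd n M).
Proof.
move=> hMN hsn; rewrite /inP /botd size_mkseq; split=> //; split=> //; split.
  apply/(sortedP 0) => i; rewrite size_mkseq => hi.
  rewrite !nth_mkseq //; [lia | exact: ltnW].
by move=> i hi; rewrite nth_mkseq //; lia.
Qed.

Lemma botd_le n M N s d : inP n M N s d -> pd_le (botd n M) d.
Proof.
move=> [h1 [h2 [h3 h4]]]; split; first by rewrite size_mkseq.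
move=> i hi; rewrite nth_mkseq; first by case: (h4 i hi).
exact: leq_trans hi h2.
Qed.

Lemma topd_in n M N s : M <= N -> (s <= n)%N -> inP n M N s (topd s N).
Proof.
move=> hMN hsn; rewrite /inP /topd size_mkseq; split=> //; split=> //; split.
  apply/(sortedP 0) => i; rewrite size_mkseq => hi.
  rewrite !nth_mkseq //; [lia | exact: ltnW].
by move=> i hi; rewrite nth_mkseq //; lia.
Qed.

Lemma topd_le n M N s d : inP n M N s d -> pd_le d (topd s N).
Proof.
move=> [h1 [h2 [h3 h4]]]; split; first by rewrite size_mkseq.
move=> i; rewrite size_mkseq => hi; rewrite nth_mkseq //.
by case: (h4 i (leq_trans hi h1)).
Qed.

Lemma rho_botd n M N : rho n M N (botd n M) = 0.
Proof.
rewrite /rho /botd size_mkseq subnn mulr0 addr0 big_nat_cond.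
by apply: big1 => i /andP [/andP [_ hi] _]; rewrite nth_mkseq //; ring.
Qed.

Definition Rtop (n s : nat) (M N : int) : int :=
  (s.+1)%:Z * (N - M) + (N - M + 1) * ((n - s)%N)%:Z.

Lemma rho_topd n M N s : (s <= n)%N -> rho n M N (topd s N) = Rtop n s M N.
Proof.
move=> hsn; rewrite /rho /topd /Rtop size_mkseq big_nat_cond.
have -> : \sum_(0 <= i < s.+1 | (0 <= i < s.+1)%N && true) (nth 0 (mkseq (fun i => N + i%:Z) s.+1) i - M - i%:Z)
  = \sum_(0 <= i < s.+1 | (0 <= i < s.+1)%N && true) (N - M).
  by apply: eq_bigr => i /andP [/andP [_ hi] _]; rewrite nth_mkseq //; ring.
rewrite -big_nat_cond sumr_const_nat -mulr_natr -natz subn0.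
rewrite natz [X in _ = X + _]mulrC; congr (_ + _); congr (_ * _); lia.
Qed.

Lemma rho_ge0 n M N s d : M <= N -> (s <= n)%N -> inP n M N s d -> 0 <= rho n M N d.
Proof.
move=> hMN hsn hd; have := rho_le (@botd_in n M N s hMN hsn) hd (botd_le hd).
have := sum_diff_ge0 (botd_le (n:=n) (M:=M) hd); rewrite rho_botd; lia.
Qed.

Lemma rho_leR n M N s d : M <= N -> (s <= n)%N -> inP n M N s d -> rho n M N d <= Rtop n s M N.
Proof.
move=> hMN hsn hd; have := rho_le hd (@topd_in n M N s hMN hsn) (topd_le hd).
have := sum_diff_ge0 (topd_le (N:=N) hd); rewrite rho_topd //; lia.
Qed.

Lemma rho_mono n M N s d d' : inP n M N s d -> inP n M N s d' -> pd_le d d' ->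
  rho n M N d <= rho n M N d'.
Proof.
move=> hd hd' hle; have := rho_le hd hd' hle; have := sum_diff_ge0 hle; lia.
Qed.


Lemma max_contains n M N s C e : maximal_chain n M N s C -> inP n M N s e ->
  (forall c, C c -> pd_le c e \/ pd_le e c) -> C e.
Proof.
move=> [[hC1 hC2] hmax] he hcmp.
pose C' := fun d => C d \/ d = e.
have hch : chain n M N s C'.
  split; first by move=> d [/hC1|->].
  move=> d d' [hd|->] [hd'|->].
  - exact: hC2.
  - exact: hcmp.
  - by case: (hcmp d' hd') => h; [right|left].
  - by left; exact: pd_le_refl.
by apply: (hmax C' hch) => //; [move=> d hd; left | right].
Qed.

Definition decP (P : Prop) : bool := if excluded_middle_informative P then true else false.
Lemma decPE (P : Prop) : decP P = true <-> P.
Proof. by rewrite /decP; case: excluded_middle_informative. Qed.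

Lemma levels n M N s C : M <= N -> (s <= n)%N -> maximal_chain n M N s C ->
  forall r : nat, r%:Z <= Rtop n s M N -> exists d, C d /\ rho n M N d = r%:Z.
Proof.
move=> hMN hsn hmc; have [[hC1 hC2] _] := hmc.
elim=> [|r IH] hr.
  exists (botd n M); split; last by rewrite rho_botd.
  apply: (max_contains hmc (@botd_in n M N s hMN hsn)) => c hc; right; exact: botd_le (hC1 c hc).
have hr' : r%:Z <= Rtop n s M N by lia.
have [a [ha hra]] := IH hr'.
apply: NNPP => hno.
pose Q k := (r.+1 < k)%N && decP (exists b, C b /\ rho n M N b = k%:Z).
have hR0 : 0 <= Rtop n s M N by lia.
have exQ : exists k, Q k.
  exists `|Rtop n s M N|%N; apply/andP; split.
    have : `|Rtop n s M N|%N <> r.+1.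
      move=> h; apply: hno; exists (topd s N); split.
        apply: (max_contains hmc (@topd_in n M N s hMN hsn)) => c hc; left; exact: topd_le (hC1 c hc).
      by rewrite rho_topd // -h gez0_abs.
    lia.
  apply/decPE; exists (topd s N); split.
    apply: (max_contains hmc (@topd_in n M N s hMN hsn)) => c hc; left; exact: topd_le (hC1 c hc).
  by rewrite rho_topd // gez0_abs.
have ubQ : forall k, Q k -> (k <= `|Rtop n s M N|%N)%N.
  move=> k /andP [_ /decPE [b [hb hrb]]].
  have := rho_leR hMN hsn (hC1 b hb); rewrite hrb; lia.
case: (ex_minnP exQ) => k /andP [hk /decPE [b [hb hrb]]] hmin.
have hab : pd_le a b.
  case: (hC2 a b ha hb) => // hba.
  have := rho_mono (hC1 b hb) (hC1 a ha) hba; rewrite hra hrb; lia.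
have [e [he [hae [heb hre]]]] : exists e, inP n M N s e /\ pd_le a e /\ pd_le e b /\ rho n M N e = rho n M N a + 1.
  apply: between (hC1 a ha) (hC1 b hb) hab _; rewrite hra hrb; lia.
have hCe : C e.
  apply: (max_contains hmc he) => c hc.
  case: (hC2 c a hc ha) => hca; first by left; exact: pd_le_trans hca hae.
  case: (hC2 c b hc hb) => hcb; last by right; exact: pd_le_trans heb hcb.
  have h1 := rho_mono (hC1 a ha) (hC1 c hc) hca.
  have h2 := rho_mono (hC1 c hc) (hC1 b hb) hcb.
  have h0 := rho_ge0 hMN hsn (hC1 c hc).
  case: (eqVneq c a) => [->|hca']; first by left.
  have h3 := rho_lt (hC1 a ha) (hC1 c hc) hca (fun h => (elimN eqP hca') (esym h)).
  case: (eqVneq c b) => [->|hcb']; first by right.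
  have h4 := rho_lt (hC1 c hc) (hC1 b hb) hcb (fun h => (elimN eqP hcb') h).
  exfalso.
  case: (eqVneq (rho n M N c) (r.+1)%:Z) => hc1.
    by apply: hno; exists c.
  have hQ : Q `|rho n M N c|%N.
    apply/andP; split; first by rewrite hra in h3; lia.
    by apply/decPE; exists c; split=> //; rewrite gez0_abs.
  have := hmin _ hQ; rewrite hrb in h4; lia.
apply: hno; exists e; split => //; rewrite hre hra; lia.
Qed.


Lemma count_neq n (i : 'I_n) : count (fun k:'I_n => k != i) (index_enum 'I_n) = n.-1.
Proof. have := cardC1 i; rewrite card_ord => <-; by rewrite cardE /enum_mem size_filter. Qed.

Lemma size_lag sz (x : 'I_sz -> rat) i :
  size (\prod_(k < sz | k != i) ('X - (x k)%:P)) = sz.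
Proof.
rewrite -big_filter size_prod_XsubC size_filter count_neq prednK //.
by case: i => i hi; apply: leq_ltn_trans hi.
Qed.

Lemma lagrange_id sz (x : 'I_sz -> rat) m : injective x -> (m.+2 <= sz)%N ->
  \sum_(i < sz) x i ^+ m * \prod_(k < sz | k != i) (x i - x k)^-1 = 0.
Proof.
move=> hx hm.
pose l i := \prod_(k < sz | k != i) ('X - (x k)%:P).
pose c i := x i ^+ m * \prod_(k < sz | k != i) (x i - x k)^-1.
pose P := \sum_(i < sz) c i *: l i - 'X^m.
have hne i k : k != i -> x i - x k != 0.
  by move=> hki; rewrite subr_eq0; apply/eqP => /hx h; move: hki; rewrite h eqxx.
have hl i j : (l i).[x j] = if j == i then \prod_(k < sz | k != i) (x i - x k) else 0.
  rewrite /l horner_prod; case: eqP => [->|/eqP hji].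
    by apply: eq_bigr => k _; rewrite hornerXsubC.
  by rewrite (bigD1 j) //= hornerXsubC subrr mul0r.
have hP0 : P = 0.
  apply: (@roots_geq_poly_eq0 _ P [seq x j | j <- enum 'I_sz]).
  - apply/allP => y /mapP [j _ ->]; rewrite /root /P hornerD hornerN hornerXn horner_sum.
    rewrite (bigD1 j) //= big1 ?addr0.
      rewrite hornerZ hl eqxx /c -mulrA prodfV mulVf ?mulr1 ?subrr //.
      by apply/prodf_neq0 => k hk; exact: hne.
    by move=> i hi; rewrite hornerZ hl eq_sym (negbTE hi) mulr0.
  - by rewrite map_inj_uniq ?enum_uniq.
  - rewrite size_map -cardE card_ord /P.
    apply: leq_trans (size_add _ _) _; rewrite geq_max size_polyN size_polyXn (ltnW hm) andbT.
    apply: leq_trans (size_sum _ _ _) _; apply/bigmax_leqP => i _.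
    by apply: leq_trans (size_scale_leq _ _) _; rewrite size_lag.
have := congr1 (fun p : {poly rat} => p`_(sz.-1)) hP0.
rewrite /P coef0 coefB coefXn coef_sum.
have -> : (sz.-1 == m) = false by apply/negbTE; lia.
rewrite subr0 => h; apply: (etrans _ h); apply eq_bigr => i _; rewrite coefZ.
have : lead_coef (l i) = 1 by apply: lead_coef_prod_XsubC.
by rewrite lead_coefE size_lag => ->; rewrite mulr1.
Qed.

Lemma lagrange_id2 sz (x : 'I_sz -> rat) m : injective x -> (m.+2 <= sz)%N ->
  \sum_(i < sz) x i ^+ m * \prod_(k < sz | k != i) (x k - x i)^-1 = 0.
Proof.
move=> hx hm.
have e i : \prod_(k < sz | k != i) (x k - x i)^-1 =
    (-1) ^+ sz.-1 * \prod_(k < sz | k != i) (x i - x k)^-1.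
  have -> : \prod_(k < sz | k != i) (x k - x i)^-1 = \prod_(k < sz | k != i) - (x i - x k)^-1.
    by apply: eq_bigr => k _; rewrite -invrN opprB.
  rewrite (prodrN (predC1 i)); congr (_ * _).
  by rewrite cardC1 card_ord.
under eq_bigr do rewrite e mulrCA.
by rewrite -mulr_sumr lagrange_id // mulr0.
Qed.

Lemma inP_inj n M N s d i k : inP n M N s d -> (i < size d)%N -> (k < size d)%N ->
  nth 0 d i = nth 0 d k -> i = k.
Proof.
move=> hd hi hk he; case: (ltngtP i k) => // h.
  by have := inP_lt hd h hk; rewrite he ltxx.
by have := inP_lt hd h hi; rewrite he ltxx.
Qed.

Lemma pure_inB n M N s d : inP n M N s d -> inB n M N (pure d).
Proof.
move=> hd i j; rewrite /pure; case: ifP => [/andP [hi /eqP ->] _|_]; last by rewrite eqxx.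
case: (hd) => [_ [h2 [_ h4]]]; have [a b] := h4 i hi; split=> //.
by rewrite -ltnS; exact: leq_trans hi h2.
Qed.

Lemma pure_out d i j : ~~ ((i < size d)%N && (j == nth 0 d i)) -> pure d i j = 0.
Proof. by rewrite /pure => /negbTE ->. Qed.

Lemma pure_nz n M N s d i : inP n M N s d -> (i < size d)%N -> pure d i (nth 0 d i) != 0.
Proof.
move=> hd hi; rewrite /pure hi eqxx /= mulf_eq0 negb_or signr_eq0 /=.
apply/prodf_neq0 => k hk; rewrite invr_eq0 intr_eq0 subr_eq0; apply/eqP => h.
by move/eqP: hk; apply; apply: inP_inj hd _ hi h.
Qed.

Lemma sum_band (M N : int) (i : nat) (F : int -> rat) j0 :
  M + i%:Z <= j0 -> j0 <= N + i%:Z -> (forall j, j != j0 -> F j = 0) ->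
  \sum_(k < `|N - M|%N.+1) F (M + i%:Z + k%:Z) = F j0.
Proof.
move=> h1 h2 hF.
have hk0 : (absz (j0 - M - i%:Z)%R < `|N - M|%N.+1)%N by lia.
rewrite (bigD1 (Ordinal hk0)) //= big1 ?addr0.
  by congr F; lia.
move=> k hk; apply: hF; apply/eqP => h; move: hk; rewrite -val_eqE /=; lia.
Qed.

Definition HKf (n : nat) (M N : int) (m : nat) (beta : array) : rat :=
  \sum_(i < n.+1) \sum_(k < `|N - M|%N.+1)
       (-1) ^+ i * beta i (M + i%:Z + k%:Z) * ((M + i%:Z + k%:Z)%:~R) ^+ m.

Lemma pure_HKf n M N s d m : inP n M N s d -> (m.+2 <= size d)%N ->
  HKf n M N m (pure d) = 0.
Proof.
move=> hd hm; case: (hd) => [h1 [h2 [h3 h4]]].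
rewrite /HKf.
under eq_bigr => i _.
  have -> : \sum_(k < `|N - M|%N.+1)
       (-1) ^+ i * pure d i (M + i%:Z + k%:Z) * ((M + i%:Z + k%:Z)%:~R) ^+ m
     = if (i < size d)%N then (-1) ^+ i * pure d i (nth 0 d i) * ((nth 0 d i)%:~R) ^+ m else 0.
    case: ifP => hi.
      have [a b] := h4 i hi.
      apply: (sum_band (F := fun j => (-1) ^+ i * pure d i j * (j%:~R) ^+ m) a b).
      by move=> j hj; rewrite pure_out ?mulr0 ?mul0r // hi.
    by apply: big1 => k _; rewrite pure_out ?mulr0 ?mul0r // hi.
  over.
rewrite -big_mkcond /= -(big_ord_widen _ (fun i => (-1) ^+ i * pure d i (nth 0 d i) * ((nth 0 d i)%:~R) ^+ m)) //.
rewrite -[RHS](lagrange_id2 (x := fun k : 'I_(size d) => ((nth 0 d k)%:~R : rat)) (m := m)) //.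
  apply: eq_bigr => i _; rewrite /pure ltn_ord eqxx /= signrMK mulrC.
  congr (_ * _); apply: eq_bigr => k hk; by rewrite intrB.
move=> a b /= /eqP; rewrite eqr_int => /eqP h; apply: val_inj; exact: inP_inj hd (ltn_ord a) (ltn_ord b) h.
Qed.

Lemma pure_HK n M N s d : inP n M N s d -> HK n M N s (pure d).
Proof.
move=> hd m hm; apply: (pure_HKf hd); case: hd => [h1 _].
exact: leq_trans h1.
Qed.


Definition cmp_on (ds : seq (seq int)) :=
  forall d d', d \in ds -> d' \in ds -> pd_le d d' \/ pd_le d' d.

Lemma exists_min (ds : seq (seq int)) : ds != [::] -> cmp_on ds ->
  exists2 d0, d0 \in ds & forall d, d \in ds -> pd_le d0 d.
Proof.
elim: ds => [//|x l IH] _ hc.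
case: (eqVneq l [::]) => [->|hl].
  by exists x; rewrite ?inE ?eqxx // => d; rewrite inE => /eqP ->; exact: pd_le_refl.
have hcl : cmp_on l by move=> d d' hd hd'; apply: hc; rewrite inE ?hd ?hd' orbT.
have [m hm hmin] := IH hl hcl.
have hm' : m \in x :: l by rewrite inE hm orbT.
case: (hc x m (mem_head _ _) hm') => hxm.
  exists x; first exact: mem_head.
  move=> d; rewrite inE => /orP [/eqP ->|hd]; first exact: pd_le_refl.
  exact: pd_le_trans hxm (hmin d hd).
exists m; first by rewrite inE hm orbT.
move=> d; rewrite inE => /orP [/eqP ->|hd] //; exact: hmin.
Qed.

Lemma sep_pos n M N s d0 rest : inP n M N s d0 ->
  (forall e, e \in rest -> inP n M N s e /\ pd_le d0 e /\ e <> d0) -> cmp_on rest ->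
  exists i0 j0, pure d0 i0 j0 != 0 /\ forall e, e \in rest -> pure e i0 j0 = 0.
Proof.
move=> hd0 h hc.
have hsz0 : (0 < size d0)%N by case: hd0 => h1 _; exact: leq_ltn_trans h1.
case: (eqVneq rest [::]) => [->|hr].
  by exists 0%N, (nth 0 d0 0); split => //; apply: pure_nz hd0 _.
have [es hes hmin] := exists_min hr hc.
have [hes1 [[hsz hle] hne]] := h es hes.
case: (ltnP (size es) (size d0)) => hs.
  have hi0 : ((size d0).-1 < size d0)%N by rewrite prednK.
  exists (size d0).-1, (nth 0 d0 (size d0).-1); split; first exact: pure_nz hd0 hi0.
  move=> e he; apply: pure_out; apply/negP => /andP [hie _].
  have [hs' _] := hmin e he.
  have : (size d0 <= size es)%N.
    by rewrite -(prednK hsz0); apply: leq_trans hie hs'.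
  by rewrite leqNgt hs.
have es_sz : size es = size d0 by apply/eqP; rewrite eqn_leq hsz hs.
have [i [hi hlt]] : exists i, (i < size es)%N /\ nth 0 d0 i < nth 0 es i.
  apply: NNPP => hno; apply: hne; apply: (eq_from_nth (x0 := 0)) => // i hi.
  have := hle i hi; rewrite le_eqVlt => /orP [/eqP -> //|hlt].
  by exfalso; apply: hno; exists i.
have hi' : (i < size d0)%N by rewrite -es_sz.
exists i, (nth 0 d0 i); split; first exact: pure_nz hd0 hi'.
move=> e he; apply: pure_out; apply/negP => /andP [hie /eqP hj].
have [_ hl2] := hmin e he.
have := hl2 i hie; rewrite -hj; move: hlt; rewrite ltNge => /negP; apply.
Qed.

Lemma chain_indep n M N s (ds : seq (seq int)) (c : seq int -> rat) :
  uniq ds -> (forall d, d \in ds -> inP n M N s d) -> cmp_on ds ->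
  (forall i j, lincomb ds c i j = 0) -> forall d, d \in ds -> c d = 0.
Proof.
move: {2}(size ds) (leqnn (size ds)) => k; elim: k ds => [|k IH] ds hk hu hin hc hz d hd.
  by move: hk; rewrite leqn0 => /nilP hnil; move: hd; rewrite hnil.
have hne : ds != [::] by apply/eqP => hnil; move: hd; rewrite hnil.
have [d0 hd0 hmin] := exists_min hne hc.
set rest := rem d0 ds.
have hsplit i j : lincomb ds c i j = c d0 * pure d0 i j + lincomb rest c i j.
  by rewrite /lincomb (big_rem d0 hd0).
have hrest e : e \in rest -> e \in ds /\ e != d0.
  by rewrite /rest (mem_rem_uniq _ hu) inE => /andP [h1 h2].
have hcr : cmp_on rest.
  by move=> e e' /hrest [he _] /hrest [he' _]; apply: hc.
have [i0 [j0 [hnz hz0]]] : exists i0 j0, pure d0 i0 j0 != 0 /\ forall e, e \in rest -> pure e i0 j0 = 0.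
  apply: (sep_pos (hin d0 hd0)) => // e /hrest [he hne'].
  split; first exact: hin.
  split; first exact: hmin.
  by move=> h; move: hne'; rewrite h eqxx.
have hc0 : c d0 = 0.
  have := hz i0 j0; rewrite hsplit.
  have -> : lincomb rest c i0 j0 = 0.
    by rewrite /lincomb big_seq big1 // => e he; rewrite hz0 // mulr0.
  by rewrite addr0 => /eqP; rewrite mulf_eq0 (negbTE hnz) orbF => /eqP.
case: (eqVneq d d0) => [-> //|hdd0].
have hdr : d \in rest by rewrite /rest (mem_rem_uniq _ hu) inE hdd0 hd.
apply: (IH rest) => //.
- by rewrite /rest size_rem // -ltnS (leq_trans _ hk) // prednK // lt0n size_eq0.
- exact: rem_uniq.
- by move=> e /hrest [he _]; exact: hin.
- by move=> i j; have := hz i j; rewrite hsplit hc0 mul0r add0r.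
Qed.


Definition Gv (n : nat) (M N : int) (beta : array) : 'rV[rat]_(n.+1 * `|N - M|%N.+1) :=
  mxvec (\matrix_(i < n.+1, k < `|N - M|%N.+1) beta i (M + i%:Z + k%:Z)).

Lemma Gv_eq n M N b1 b2 : M <= N -> inB n M N b1 -> inB n M N b2 -> Gv n M N b1 = Gv n M N b2 ->
  forall i j, b1 i j = b2 i j.
Proof.
move=> hMN h1 h2 hG i j.
case: (classic ((i <= n)%N /\ M + i%:Z <= j /\ j <= N + i%:Z)) => [[hi [hl hu]]|hno].
  have hi' : (i < n.+1)%N by [].
  have hk : (absz (j - M - i%:Z)%R < `|N - M|%N.+1)%N by lia.
  have := congr1 (fun v : 'rV_ _ => v 0 (mxvec_index (Ordinal hi') (Ordinal hk))) hG.
  rewrite /Gv !mxvecE !mxE /=.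
  have -> : M + i%:Z + (absz (j - M - i%:Z)%R)%:Z = j by lia.
  by [].
have z1 : b1 i j = 0 by case: (eqVneq (b1 i j) 0) => // hne; exfalso; apply: hno; exact: h1 hne.
have z2 : b2 i j = 0 by case: (eqVneq (b2 i j) 0) => // hne; exfalso; apply: hno; exact: h2 hne.
by rewrite z1 z2.
Qed.

Lemma Gv_mul n M N p (F : 'I_p -> array) (w : 'rV[rat]_p) :
  w *m (\matrix_(q, x) Gv n M N (F q) 0 x) = Gv n M N (fun i j => \sum_(q < p) w 0 q * F q i j).
Proof.
apply/rowP => x; case: (mxvec_indexP x) => i k.
rewrite /Gv mxvecE !mxE; apply: eq_bigr => q _; by rewrite mxE mxvecE mxE.
Qed.

Lemma Gv0 n M N : Gv n M N (fun _ _ => 0) = 0.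
Proof.
apply/rowP => x; case: (mxvec_indexP x) => i k; by rewrite /Gv mxvecE !mxE.
Qed.

Lemma inB0 n M N : inB n M N (fun _ _ => 0).
Proof. by move=> i j; rewrite eqxx. Qed.

Lemma inB_comb n M N (I : eqType) (r : seq I) (a : I -> rat) (F : I -> array) :
  (forall q, q \in r -> inB n M N (F q)) -> inB n M N (fun i j => \sum_(q <- r) a q * F q i j).
Proof.
move=> hF i j hnz; apply: NNPP => hno; move: hnz; rewrite big_seq big1 ?eqxx // => q hq.
have -> : F q i j = 0 by case: (eqVneq (F q i j) 0) => // hne; exfalso; apply: hno; exact: hF q hq i j hne.
by rewrite mulr0.
Qed.

Lemma HKf_comb n M N m (I : Type) (r : seq I) (a : I -> rat) (F : I -> array) :
  HKf n M N m (fun i j => \sum_(q <- r) a q * F q i j) = \sum_(q <- r) a q * HKf n M N m (F q).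
Proof.
rewrite /HKf.
under eq_bigr => i _ do under eq_bigr => k _ do rewrite mulr_sumr mulr_suml.
under eq_bigr => i _ do rewrite exchange_big /=.
rewrite exchange_big /=; apply: eq_bigr => q _.
rewrite mulr_sumr; apply: eq_bigr => i _; rewrite mulr_sumr; apply: eq_bigr => k _.
ring.
Qed.

Definition unitarr (M : int) (b : nat) : array :=
  fun i j => if (i == b) && (j == M + b%:Z) then 1 else 0.

Lemma unitarr_inB n M N b : M <= N -> (b <= n)%N -> inB n M N (unitarr M b).
Proof.
move=> hMN hb i j; rewrite /unitarr; case: ifP => [/andP [/eqP -> /eqP ->] _|_]; last by rewrite eqxx.
by split=> //; lia.
Qed.

Lemma unitarr_HKf n M N m b : M <= N -> (b <= n)%N ->
  HKf n M N m (unitarr M b) = (-1) ^+ b * ((M + b%:Z)%:~R) ^+ m.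
Proof.
move=> hMN hb; rewrite /HKf.
have hb' : (b < n.+1)%N by [].
rewrite (bigD1 (Ordinal hb')) //= [X in _ + X]big1 ?addr0.
  have h1 : M + b%:Z <= M + b%:Z by [].
  have h2 : M + b%:Z <= N + b%:Z by lia.
  have hF : forall j, j != M + b%:Z -> (fun j => (-1) ^+ b * unitarr M b b j * (j%:~R) ^+ m) j = 0.
    by move=> j hj; rewrite /unitarr eqxx (negbTE hj) mulr0 mul0r.
  have hs := sum_band h1 h2 hF; simpl in hs; rewrite hs.
  by rewrite /unitarr !eqxx mulr1.
move=> i hi; apply: big1 => k _; rewrite /unitarr.
have -> : (nat_of_ord i == b) = false by apply/negbTE; move: hi; rewrite -val_eqE.
by rewrite mulr0 mul0r.
Qed.

Lemma vdm s (y : 'I_s -> rat) (u : 'I_s -> rat) : injective y ->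
  (forall m, (m < s)%N -> \sum_(b < s) u b * y b ^+ m = 0) -> forall b, u b = 0.
Proof.
move=> hy hu b.
pose V := Vandermonde s (\row_b y b).
have hV : row_free V^T.
  rewrite row_free_unit unitmx_tr unitmxE unitfE det_Vandermonde.
  apply/prodf_neq0 => i _; apply/prodf_neq0 => j hij; rewrite !mxE subr_eq0.
  by apply/eqP => /hy h; move: hij; rewrite h ltnn.
have : (\row_b u b) *m V^T == 0.
  apply/eqP/rowP => m; rewrite !mxE; rewrite -[RHS](hu m (ltn_ord m)).
  by apply: eq_bigr => i _; rewrite !mxE.
rewrite mulmx_free_eq0 // => /eqP /rowP /(_ b); by rewrite !mxE.
Qed.


Unset Implicit Arguments.

Theorem proposition2p3 (n : nat) (M N : int) :
  (1 <= n)%N -> M <= N ->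
  forall s : nat, (s <= n)%N ->
  forall C : seq int -> Prop, maximal_chain n M N s C -> is_basis_Bs n M N s C.
Proof.
move=> hn hMN s hsn C hmc.
have [[hC1 hC2] _] := hmc.
have hindep : forall (ds : seq (seq int)) (c : seq int -> rat),
     uniq ds -> (forall d, d \in ds -> C d) ->
     (forall i j, lincomb ds c i j = 0) ->
     forall d, d \in ds -> c d = 0.
  move=> ds c hu hin hz d hd.
  apply: (chain_indep (n:=n) (M:=M) (N:=N) (s:=s) hu) => //.
  - by move=> e he; apply: hC1; apply: hin.
  - by move=> e e' he he'; apply: hC2; apply: hin.
split => // beta; split; last first.
  move=> [ds [c [hin heq]]].
  have eb : beta = lincomb ds c by apply: functional_extensionality => i; apply: functional_extensionality => j.
  rewrite eb; split.
    by apply: inB_comb => d hd; apply: pure_inB (hC1 _ (hin d hd)).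
  move=> m hm; rewrite -/(HKf n M N m _) /lincomb HKf_comb big_seq big1 // => d hd.
  rewrite (pure_HKf (hC1 _ (hin d hd))) ?mulr0 //.
  by have [h1 _] := hC1 _ (hin d hd); apply: leq_trans h1.
move=> [hB hHK].
set R := Rtop n s M N.
have hR0 : 0 <= R by rewrite /R /Rtop; nia.
set K := (absz R).+1.
have hex : forall r : nat, exists d, (r%:Z <= R -> C d /\ rho n M N d = r%:Z).
  move=> r; case: (classic (r%:Z <= R)) => h.
    by have [d hd] := levels hMN hsn hmc h; exists d.
  by exists [::].
pose pick r := proj1_sig (constructive_indefinite_description _ (hex r)).
have hpick r : (r < K)%N -> C (pick r) /\ rho n M N (pick r) = r%:Z.
  move=> hr; apply: (proj2_sig (constructive_indefinite_description _ (hex r))).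
  rewrite /K in hr; lia.
have hinj a b : (a < K)%N -> (b < K)%N -> pick a = pick b -> a = b.
  move=> ha hb he; have [_ ra] := hpick a ha; have [_ rb] := hpick b hb.
  by move: ra; rewrite he rb => /eqP; rewrite eqz_nat => /eqP.
pose F : 'I_(K + s) -> array := fun q => if (q < K)%N then pure (pick q) else unitarr M (q - K).
pose A := \matrix_(q, x) Gv n M N (F q) 0 x.
have hKs : (K + s = n.+1 * `|N - M|%N.+1)%N.
  rewrite /K; move: hR0; rewrite /R /Rtop => hR0; nia.
have inBF q : inB n M N (F q).
  rewrite /F; case: ifP => hq.
    by apply: pure_inB (hC1 _ (proj1 (hpick q hq))).
  apply: unitarr_inB => //; move: (ltn_ord q) hq; lia.
pose comb (w : 'rV[rat]_(K + s)) := fun i j => \sum_(q < K + s) w 0 q * F q i j.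
have inBc w : inB n M N (comb w) by apply: inB_comb => q _; exact: inBF.
have hFl (a : 'I_K) : F (lshift s a) = pure (pick a).
  by rewrite /F /= ltn_ord.
have hFr (b : 'I_s) : F (rshift K b) = unitarr M b.
  by rewrite /F /= ltnNge leq_addr /= addKn.
have kill w : (forall m, (m < s)%N -> HKf n M N m (comb w) = 0) -> forall b : 'I_s, w 0 (rshift K b) = 0.
  move=> hw b.
  have hu := @vdm s (fun b : 'I_s => ((M + b%:Z)%:~R : rat)) (fun b => w 0 (rshift K b) * (-1) ^+ b).
  have hy : injective (fun b : 'I_s => ((M + b%:Z)%:~R : rat)).
    by move=> x y /= /eqP; rewrite eqr_int => /eqP h; apply: ord_inj; lia.
  have hs : forall m, (m < s)%N -> \sum_(b < s) (w 0 (rshift K b) * (-1) ^+ b) * ((M + b%:Z)%:~R : rat) ^+ m = 0.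
    move=> m hm; have := hw m hm.
    rewrite /comb HKf_comb big_split_ord /= big1 ?add0r.
      move=> h; apply: (etrans _ h); apply eq_bigr => b' _; rewrite hFr unitarr_HKf //; last by move: (ltn_ord b') hsn; lia.
      by rewrite mulrA.
    move=> a _; rewrite hFl (pure_HKf (hC1 _ (proj1 (hpick a (ltn_ord a))))) ?mulr0 //.
    have [h1 _] := hC1 _ (proj1 (hpick a (ltn_ord a))); exact: leq_trans h1.
  have := hu hy hs b.
  by move=> /eqP; rewrite mulf_eq0 signr_eq0 orbF => /eqP.
set ds := map pick (index_iota 0 K).
have dsC d : d \in ds -> C d.
  by move=> /mapP [r]; rewrite mem_index_iota => /andP [_ hr] ->; exact: (proj1 (hpick r hr)).
have dsu : uniq ds.
  rewrite map_inj_in_uniq ?iota_uniq // => a b; rewrite !mem_index_iota => /andP [_ ha] /andP [_ hb].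
  exact: hinj.
pose cw (wl : 'I_K -> rat) (d : seq int) := \sum_(a < K) (if pick a == d then wl a else 0).
have cw_pick wl (r : 'I_K) : cw wl (pick r) = wl r.
  rewrite /cw (bigD1 r) //= eqxx big1 ?addr0 // => a har.
  case: eqP => // he; exfalso; move: har; rewrite -val_eqE /=.
  by rewrite (hinj _ _ (ltn_ord a) (ltn_ord r) he) eqxx.
have lin_eq wl i j : lincomb ds (cw wl) i j = \sum_(a < K) wl a * pure (pick a) i j.
  rewrite /lincomb /ds big_map big_mkord; apply: eq_bigr => a _; by rewrite cw_pick.
have comb_eq (w : 'rV[rat]_(K + s)) (i : nat) (j : int) : (forall b : 'I_s, w 0 (rshift K b) = 0) ->
    comb w i j = lincomb ds (cw (fun a => w 0 (lshift s a))) i j.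
  move=> hz; rewrite lin_eq /comb big_split_ord /= [X in _ + X]big1 ?addr0.
    by apply: eq_bigr => a _; rewrite hFl.
  by move=> b _; rewrite hz mul0r.
have hfree : row_free A.
  apply: inj_row_free => w hw.
  have hG : Gv n M N (comb w) = Gv n M N (fun _ _ => 0) by rewrite Gv0 -hw Gv_mul.
  have hc0 := Gv_eq hMN (inBc w) (inB0 n M N) hG.
  have hr : forall b : 'I_s, w 0 (rshift K b) = 0.
    apply: kill => m hm; rewrite (_ : comb w = fun _ _ => 0); last first.
      by apply: functional_extensionality => i; apply: functional_extensionality => j; apply: hc0.
    by rewrite /HKf big1 // => i _; rewrite big1 // => k _; rewrite mulr0 mul0r.
  have hl : forall a : 'I_K, w 0 (lshift s a) = 0.
    move=> a; rewrite -(cw_pick (fun a => w 0 (lshift s a))).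
    apply: (hindep ds) => //.
      by move=> i j; rewrite -comb_eq //; exact: hc0.
    by apply/mapP; exists (nat_of_ord a) => //; rewrite mem_index_iota ltn_ord.
  apply/rowP => q; rewrite mxE -(splitK q); case: (split q) => [a|b] /=; [exact: hl | exact: hr].
have hfull : row_full A by rewrite /row_full (eqP hfree) hKs.
have := submx_full (Gv n M N beta) hfull => /submxP [w hw].
rewrite Gv_mul -/(comb w) in hw.
have hbc := Gv_eq hMN hB (inBc w) hw.
have ebc : beta = comb w.
  by apply: functional_extensionality => i; apply: functional_extensionality => j; apply: hbc.
have hr : forall b : 'I_s, w 0 (rshift K b) = 0.
  by apply: kill => m hm; rewrite -ebc; exact: hHK.
exists ds, (cw (fun a => w 0 (lshift s a))); split => // i j.
by rewrite hbc comb_eq.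
Qed.
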